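(* Let $A\in\{0,1\}^{N\times n}$ be such that every row has exactly $k$ ones, and let $\mathcal{C}_A=\{\{i\in[n]:A_{ji}=1\}: j\in[N]\}$ be the family of row supports. Suppose $U_1,\dots,U_N,V_1,\dots,V_n\in\mathbb{R}^d$ form a margin-$m$, relative-bias-$0$ embedding of $A$ with $m>0$. Fix $\alpha\in(0,1/2]$ and set $s=\lfloor\alpha k\rfloor$, and assume $s\ge1$. Let $\mathcal{F}_s(A)$ be a family of $s$-element subsets of $[n]$ such that for all distinct $T,T'\in\mathcal{F}_s(A)$, $|T\cap T'|<\frac s2$ and $T\cup T'$ is shattered by $\mathcal{C}_A$. Then $$d\ \ge\ \frac{\log|\mathcal{F}_s(A)|}{\log\bigl(1+\frac{2}{m\sqrt{s}}\bigr)}.$$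
   Context: For $A\in\{0,1\}^{N\times n}$ and $m\ge0$, unit vectors $U_1,\dots,U_N,V_1,\dots,V_n\in\mathbb{R}^d$ form a margin-$m$, relative-bias-$0$ embedding of $A$ if $\langle U_j,V_i\rangle\ge m$ whenever $A_{ji}=1$ and $\langle U_j,V_i\rangle\le -m$ whenever $A_{ji}=0$. A set $B\subseteq[n]$ is shattered by a family $\mathcal{S}$ of subsets of $[n]$ if for every $C\subseteq B$ there is $S'\in\mathcal{S}$ with $S'\cap B=C$. *)

(* Defs.v *)
From HB Require Import structures.
From mathcomp Require Import all_boot all_order all_algebra.
From mathcomp Require Import all_classical all_reals all_analysis.
Set Implicit Arguments. Unset Strict Implicit. Unset Printing Implicit Defensive.
Import Order.TTheory GRing.Theory Num.Theory.
Local Open Scope ring_scope.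

Definition dotv (R : realType) (d : nat) (u v : 'rV[R]_d) : R :=
  \sum_(i < d) u 0 i * v 0 i.

Definition unit_vec (R : realType) (d : nat) (u : 'rV[R]_d) : Prop :=
  dotv u u = 1.

Definition margin_embedding (R : realType) (N n d : nat) (A : 'M[bool]_(N, n))
    (m : R) (U : 'I_N -> 'rV[R]_d) (V : 'I_n -> 'rV[R]_d) : Prop :=
  (forall j, unit_vec (U j)) /\ (forall i, unit_vec (V i)) /\
  (forall j i, A j i -> m <= dotv (U j) (V i)) /\
  (forall j i, ~~ A j i -> dotv (U j) (V i) <= - m).

Definition row_supp (N n : nat) (A : 'M[bool]_(N, n)) (j : 'I_N) : {set 'I_n} :=
  [set i | A j i].

Definition row_family (N n : nat) (A : 'M[bool]_(N, n)) : {set {set 'I_n}} :=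
  [set row_supp A j | j : 'I_N].

Definition shattered (n : nat) (S : {set {set 'I_n}}) (B : {set 'I_n}) : Prop :=
  forall C : {set 'I_n}, C \subset B -> exists2 S', S' \in S & S' :&: B = C.

(* Main.v *)
Require Import Defs.
From HB Require Import structures.
From mathcomp Require Import all_boot all_order all_algebra.
From mathcomp Require Import all_classical all_reals all_analysis.
From mathcomp Require Import ring lra.
Set Implicit Arguments. Unset Strict Implicit. Unset Printing Implicit Defensive.
Import Order.TTheory GRing.Theory Num.Theory.
Local Open Scope ring_scope.

Section Vec.
Variables (R : realType) (d : nat).
Implicit Types u v w : 'rV[R]_d.

Definition nrm u := Num.sqrt (dotv u u).

Lemma dotvC u v : dotv u v = dotv v u.
Proof. by apply: eq_bigr => i _; rewrite mulrC. Qed.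

Lemma dotv_ge0 u : 0 <= dotv u u.
Proof. by apply: sumr_ge0 => i _; rewrite -expr2 sqr_ge0. Qed.

Lemma dotv_expand u v c :
  dotv (u + c *: v) (u + c *: v) = dotv u u + 2 * c * dotv u v + c ^+ 2 * dotv v v.
Proof.
rewrite /dotv !mulr_sumr -!big_split; apply: eq_bigr => i _; rewrite !mxE /=; ring.
Qed.

Lemma dotvZ c u : dotv (c *: u) (c *: u) = c ^+ 2 * dotv u u.
Proof. rewrite /dotv mulr_sumr; apply: eq_bigr => i _; rewrite !mxE; ring. Qed.

Lemma coord_le u k : u 0 k ^+ 2 <= dotv u u.
Proof.
rewrite /dotv (bigD1 k) //= -expr2 lerDl; apply: sumr_ge0 => i _.
by rewrite -expr2 sqr_ge0.
Qed.

Lemma dotv_CS u v : dotv u v ^+ 2 <= dotv u u * dotv v v.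
Proof.
have [v0|vpos] := eqVneq (dotv v v) 0.
  have vk : forall k, v 0 k = 0.
    move=> k; have := coord_le v k; rewrite v0 => h.
    apply/eqP; rewrite -sqrf_eq0; apply/eqP/le_anti; rewrite h sqr_ge0 //.
  rewrite v0 mulr0 /dotv big1 ?expr0n //= => k _; by rewrite vk mulr0.
have cpos : 0 < dotv v v by rewrite lt_def vpos dotv_ge0.
have := dotv_ge0 (u + (- (dotv u v / dotv v v)) *: v).
rewrite dotv_expand.
have -> : dotv u u + 2 * - (dotv u v / dotv v v) * dotv u v +
   (- (dotv u v / dotv v v)) ^+ 2 * dotv v v =
   (dotv u u * dotv v v - dotv u v ^+ 2) / dotv v v by field; rewrite vpos.
rewrite pmulr_lge0 ?invr_gt0 // subr_ge0 //.
Qed.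

Lemma nrm_ge0 u : 0 <= nrm u. Proof. exact: sqrtr_ge0. Qed.

Lemma nrm_sq u : nrm u ^+ 2 = dotv u u.
Proof. by rewrite sqr_sqrtr // dotv_ge0. Qed.

Lemma dot_le_nrm u v : dotv u v <= nrm u * nrm v.
Proof.
apply: (le_trans (ler_norm _)); rewrite -sqrtr_sqr /nrm -sqrtrM ?dotv_ge0 //.
by apply: ler_wsqrtr; apply: dotv_CS.
Qed.

Lemma nrmZ c u : nrm (c *: u) = `|c| * nrm u.
Proof. by rewrite /nrm dotvZ sqrtrM ?sqr_ge0 // sqrtr_sqr. Qed.

Lemma nrmN u : nrm (- u) = nrm u.
Proof. by rewrite -scaleN1r nrmZ normrN1 mul1r. Qed.

Lemma nrmD u v : nrm (u + v) <= nrm u + nrm v.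
Proof.
have -> : u + v = u + 1 *: v by rewrite scale1r.
rewrite /nrm dotv_expand -/(nrm u) -/(nrm v).
rewrite -(ger0_norm (addr_ge0 (nrm_ge0 u) (nrm_ge0 v))) -sqrtr_sqr.
apply: ler_wsqrtr.
have h := dot_le_nrm u v.
rewrite sqrrD -!nrm_sq expr1n mul1r mulr1; lra.
Qed.

Lemma nrmB u v : nrm (u - v) <= nrm u + nrm v.
Proof. by apply: (le_trans (nrmD _ _)); rewrite nrmN. Qed.

Lemma coord_nrm u k : `|u 0 k| <= nrm u.
Proof. by rewrite -sqrtr_sqr; apply: ler_wsqrtr; apply: coord_le. Qed.


Lemma crude (s : seq 'rV[R]_d) (a e : R) : 0 <= a -> 0 < e ->
  (forall x, x \in s -> nrm x <= a) ->
  pairwise (fun x y => e < nrm (x - y)) s ->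
  (size s)%:R <= (2 * a * (d.+1)%:R / e + 1) ^+ d.
Proof.
move=> a0 e0 sa sp.
pose h := e / (d.+1)%:R.
have h0 : 0 < h by rewrite /h divr_gt0 // ltr0n.
pose L := Num.truncn (2 * a / h).
pose cell (x : 'rV[R]_d) : {ffun 'I_d -> 'I_L.+1} :=
  [ffun k => inord (Num.truncn ((x 0 k + a) / h))].
have key : forall x y, x \in s -> y \in s -> e < nrm (x - y) -> cell x != cell y.
  move=> x y xs ys exy; apply/eqP => cxy.
  have bnd : forall (z : 'rV[R]_d) (k : 'I_d), z \in s -> 0 <= (z 0 k + a) / h /\
      (Num.truncn ((z 0 k + a) / h)%R < L.+1)%N.
    move=> z k zs; have := le_trans (coord_nrm z k) (sa z zs).
    rewrite ler_norml => /andP [h1 h2]; split.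
      by apply: divr_ge0; [lra | exact: ltW].
    rewrite ltnS truncn_le_nat; apply: (le_lt_trans _ (truncnS_gt _)).
    by rewrite ler_pM2r ?invr_gt0 //; lra.
  have dk : forall k, (x 0 k - y 0 k) ^+ 2 <= h ^+ 2.
    move=> k; have := f_equal (fun f : {ffun 'I_d -> 'I_L.+1} => nat_of_ord (f k)) cxy; rewrite /cell !ffunE /=.
    have [hx0 hxL] := bnd x k xs; have [hy0 hyL] := bnd y k ys.
    rewrite !inordK // => eqt.
    have := truncn_itv hx0; have := truncn_itv hy0; rewrite eqt.
    set n := Num.truncn _.
    move=> /andP [a1 a2] /andP [b1 b2].
    rewrite -[X in X <= _]real_normK ?num_real //; apply: lerXn2r; [by rewrite nnegrE normr_ge0 | by rewrite nnegrE ltW | ].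
    have hx : (x 0 k + a) / h - (y 0 k + a) / h = (x 0 k - y 0 k) / h by field; apply: lt0r_neq0.
    have : `|(x 0 k - y 0 k) / h| <= 1.
      rewrite -hx ler_norml; apply/andP; split.
        have : n.+1%:R = n%:R + 1 :> R by rewrite -natr1.
        lra.
      have : n.+1%:R = n%:R + 1 :> R by rewrite -natr1.
      lra.
    by rewrite normrM normfV (gtr0_norm h0) ler_pdivrMr // mul1r.
  have : dotv (x - y) (x - y) < e ^+ 2.
    apply: (le_lt_trans (y := h ^+ 2 *+ d)).
      apply: (le_trans (y := \sum_(k < d) h ^+ 2)); last by rewrite sumr_const card_ord.
      rewrite /dotv; apply: ler_sum => k _.
      by rewrite !mxE -expr2; apply: dk.
    rewrite /h expr_div_n -mulr_natr.
    rewrite mulrAC ltr_pdivrMr ?exprn_gt0 ?ltr0n //.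
    rewrite ltr_pM2l ?exprn_gt0 //.
    rewrite -natrX ltr_nat; apply: (@leq_trans d.+1) => //.
    by rewrite expnS leq_pmulr.
  rewrite -(ltr_sqrt _ (exprn_gt0 2 e0)) sqrtr_sqr gtr0_norm // -/(nrm _) => hlt.
  by move: hlt; rewrite ltNge (ltW exy).
have us : uniq (map cell s).
  rewrite uniq_pairwise pairwise_map.
  apply: (sub_in_pairwise (P := mem s)) sp; last by apply/allP.
  by move=> x y xs ys /=; apply: key.
have : (size s <= L.+1 ^ d)%N.
  rewrite -(size_map cell).
  apply: (leq_trans (uniq_leq_size (s2 := enum {ffun 'I_d -> 'I_L.+1}) us _)).
    by move=> z _; rewrite mem_enum.
  by rewrite -cardT card_ffun !card_ord.
rewrite -(ler_nat R) natrX => hs; apply: (le_trans hs).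
apply: lerXn2r; rewrite ?nnegrE ?ler0n //.
  apply: addr_ge0 => //; apply: divr_ge0; last exact: ltW.
  by apply: mulr_ge0; [apply: mulr_ge0 | rewrite ler0n].
rewrite -natr1 lerD2r.
have -> : 2 * a * (d.+1)%:R / e = 2 * a / h.
  by rewrite /h invf_div mulrA.
by rewrite truncn_le; apply: divr_ge0; [apply: mulr_ge0 | exact: ltW].
Qed.


Definition sep (e : R) := fun x y : 'rV[R]_d => e < nrm (x - y).

Lemma nrm0 : nrm (0 : 'rV[R]_d) = 0.
Proof.
by rewrite /nrm /dotv big1 ?sqrtr0 // => k _; rewrite mxE mul0r.
Qed.

Lemma step (P S : seq 'rV[R]_d) (rho delta a' e e' th : R) :
  0 < th ->
  (forall p, p \in P -> nrm p <= rho) -> pairwise (sep delta) P ->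
  (forall q, q \in S -> nrm q <= a') -> pairwise (sep e) S ->
  e' <= delta - 2 * th * a' -> e' <= th * e ->
  (forall x, x \in [seq p + th *: q | p <- P, q <- S] -> nrm x <= rho + th * a')
  /\ pairwise (sep e') [seq p + th *: q | p <- P, q <- S].
Proof.
move=> thp Pb Pp Sb Sp e1 e2; have th0 := ltW thp; split.
  move=> x /allpairsP [[p q] [/= pP qS ->]].
  apply: (le_trans (nrmD _ _)); rewrite nrmZ ger0_norm //.
  by apply: lerD; [apply: Pb | apply: ler_wpM2l => //; apply: Sb].
elim: P Pb Pp => // p P IH Pb; rewrite pairwise_cons => /andP [pa Pp].
rewrite allpairs_cons pairwise_cat; apply/and3P; split.
- apply/allrelP => x y /mapP [q qS ->] /allpairsP [[p' q'] [/= p'P q'S ->]].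
  have hpp : delta < nrm (p - p') by move/allP: pa => /(_ p' p'P).
  have ide : p - p' = ((p + th *: q) - (p' + th *: q')) + th *: (q' - q).
    by apply/rowP => k; rewrite !mxE; ring.
  have := nrmD ((p + th *: q) - (p' + th *: q')) (th *: (q' - q)).
  rewrite -ide nrmZ ger0_norm // => h1.
  have h2 := nrmB q' q; have h3 := Sb q qS; have h4 := Sb q' q'S.
  have h5 : th * nrm (q' - q) <= th * (2 * a') .
    by apply: ler_wpM2l => //; lra.
  rewrite /sep; lra.
- rewrite pairwise_map; apply: (sub_in_pairwise (P := mem S)) Sp; last by apply/allP.
  move=> q q' qS q'S; rewrite /sep /relpre /= => hq.
  have -> : p + th *: q - (p + th *: q') = th *: (q - q').
    by apply/rowP => k; rewrite !mxE; ring.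
  rewrite nrmZ ger0_norm //.
  by apply: (le_lt_trans e2); rewrite ltr_pM2l.
- by apply: IH => // x xP; apply: Pb; rewrite inE xP orbT.
Qed.


Fixpoint ak (rho th : R) (k : nat) : R :=
  if k is k'.+1 then rho + th * ak rho th k' else 0.

Lemma bern (x : R) (k : nat) : 1 <= x -> 1 + k%:R * (x - 1) <= x ^+ k.
Proof.
move=> x1; elim: k => [|k IH]; first by rewrite mul0r addr0 expr0.
rewrite exprS -natr1.
have h : x * (1 + k%:R * (x - 1)) <= x * x ^+ k by apply: ler_wpM2l => //; lra.
have hx : 0 <= x - 1 by lra.
have hk : 0 <= k%:R :> R by rewrite ler0n.
have h0 := mulr_ge0 (mulr_ge0 hk hx) hx.
nra.
Qed.

Lemma packing (P : seq 'rV[R]_d) (rho delta : R) : 0 < rho -> 0 < delta ->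
  (forall p, p \in P -> nrm p <= rho) -> pairwise (sep delta) P ->
  (size P)%:R <= (1 + 2 * rho / delta) ^+ d.
Proof.
move=> r0 d0 Pb Pp.
set q := 1 + 2 * rho / delta.
have q1 : 1 <= q by rewrite /q lerDl; apply: divr_ge0; lra.
have q0 : 0 < q by apply: (lt_le_trans ltr01).
pose th := q^-1.
have th0 : 0 < th by rewrite invr_gt0.
have th1 : th <= 1 by rewrite invr_le1 // ?unitfE ?gt_eqF.
have thid : 2 * th * rho = delta - th * delta.
  by rewrite /th /q; field; rewrite gt_eqF //= gt_eqF //; lra.
have akid : forall k, 2 * th * ak rho th k = delta - delta * th ^+ k.
  elim=> [|k IH] /=; first by rewrite mulr0 expr0 mulr1 subrr.
  have -> : 2 * th * (rho + th * ak rho th k) = 2 * th * rho + th * (2 * th * ak rho th k) by ring.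
  by rewrite IH thid exprS; ring.
have claim : forall k, exists S : seq 'rV[R]_d, [/\ size S = (size P ^ k)%N,
    (forall x, x \in S -> nrm x <= ak rho th k) & pairwise (sep (delta * th ^+ k)) S].
  elim=> [|k [S [sz Sb Sp]]].
    exists [:: 0]; split => // x.
    by rewrite inE => /eqP ->; rewrite nrm0.
  have thk0 : 0 <= th ^+ k by apply: exprn_ge0; apply: ltW.
  have e1 : delta * th ^+ k.+1 <= delta - 2 * th * ak rho th k.
    have -> : delta - 2 * th * ak rho th k = delta * th ^+ k by rewrite akid; ring.
    by rewrite exprS ler_pM2l // ler_piMl.
  have e2 : delta * th ^+ k.+1 <= th * (delta * th ^+ k) by rewrite exprS mulrCA.
  have [h1 h2] := step th0 Pb Pp Sb Sp e1 e2.
  exists [seq p + th *: q | p <- P, q <- S]; split => //.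
  by rewrite size_allpairs sz expnS.
pose C := q * (d.+1)%:R + 1.
have C0 : 0 <= C by rewrite /C; apply: addr_ge0 => //; apply: mulr_ge0; rewrite ?ler0n ?ltW.
have bnd : forall k, ((size P) ^ k)%:R <= (C * q ^+ k) ^+ d.
  move=> k; have [S [sz Sb Sp]] := claim k.
  have thk : th ^+ k <= 1 by apply: exprn_ile1 => //; apply: ltW.
  have thk0 : 0 < th ^+ k by apply: exprn_gt0.
  have akq : ak rho th k = (delta - delta * th ^+ k) * q / 2.
    rewrite -akid /th; field; rewrite gt_eqF //.
  have ak0 : 0 <= ak rho th k.
    rewrite akq; apply: divr_ge0 => //; apply: mulr_ge0; last exact: ltW.
    rewrite subr_ge0; apply: ler_piMr => //; exact: ltW.
  have akle : ak rho th k <= delta * q / 2.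
    rewrite akq ler_pM2r // ler_pM2r // gerBl; apply: mulr_ge0; apply: ltW => //.
  have e0 : 0 < delta * th ^+ k by apply: mulr_gt0.
  have := crude ak0 e0 Sb Sp; rewrite sz => h; apply: (le_trans h).
  have Y1 : 1 <= q ^+ k by apply: exprn_ege1.
  apply: lerXn2r.
  - rewrite nnegrE; apply: addr_ge0 => //; apply: divr_ge0; last exact: ltW.
    by apply: mulr_ge0; [apply: mulr_ge0 | rewrite ler0n].
  - by rewrite nnegrE; apply: mulr_ge0 => //; apply: exprn_ge0; apply: ltW.
  have -> : 2 * ak rho th k * (d.+1)%:R / (delta * th ^+ k) =
     2 * ak rho th k * (d.+1)%:R / delta * q ^+ k.
    by rewrite /th exprVn invfM invrK mulrA.
  rewrite /C [X in _ <= X]mulrDl [X in _ <= _ + X]mul1r; apply: lerD => //.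
  apply: ler_wpM2r; first by apply: exprn_ge0; apply: ltW.
  rewrite ler_pdivrMr //.
  have hd : 0 <= (d.+1)%:R :> R by rewrite ler0n.
  have := ler_wpM2r hd akle; lra.
rewrite leNgt; apply/negP => hM.
have qd0 : 0 < q ^+ d by apply: exprn_gt0.
pose x := (size P)%:R / q ^+ d.
have x1 : 1 < x by rewrite /x ltr_pdivlMr // mul1r.
have xk : forall k, x ^+ k <= C ^+ d.
  move=> k; have := bnd k; rewrite natrX exprMn exprAC /x expr_div_n.
  by rewrite ler_pdivrMr ?exprn_gt0 // mulrC.
pose k := (Num.truncn (C ^+ d / (x - 1))).+1.
have hk : C ^+ d / (x - 1) < k%:R by apply: truncnS_gt.
have := bern k (ltW x1); have := xk k.
rewrite ltr_pdivrMr ?subr_gt0 // in hk.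
lra.
Qed.

End Vec.

Lemma dotv00 (R : realType) (d : nat) : dotv (0 : 'rV[R]_d) 0 = 0.
Proof. by rewrite /dotv big1 // => k _; rewrite mxE mul0r. Qed.

Lemma dotv_sum (R : realType) (d n : nat) (u : 'rV[R]_d) (c : 'I_n -> R)
    (W : 'I_n -> 'rV[R]_d) :
  dotv u (\sum_i c i *: W i) = \sum_i c i * dotv u (W i).
Proof.
rewrite /dotv.
transitivity (\sum_k \sum_i u 0 k * (c i * W i 0 k)).
  by apply: eq_bigr => k _; rewrite summxE mulr_sumr; apply: eq_bigr => i _; rewrite !mxE.
rewrite exchange_big; apply: eq_bigr => i _; rewrite mulr_sumr.
by apply: eq_bigr => k _ /=; ring.
Qed.

Lemma greedy_seq (R : realType) (d n : nat) (V : 'I_n -> 'rV[R]_d)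
    (Vu : forall i, dotv (V i) (V i) = 1) (r : seq 'I_n) : uniq r ->
  exists sg : 'I_n -> R, (forall i, sg i = 1 \/ sg i = -1) /\
    dotv (\sum_(i <- r) sg i *: V i) (\sum_(i <- r) sg i *: V i) <= (size r)%:R.
Proof.
elim: r => [_|i r IH /= /andP [ir ur]].
  by exists (fun _ => 1); split; [left | rewrite big_nil dotv00].
have [sg [sgpm sgb]] := IH ur.
set y := \sum_(j <- r) sg j *: V j in sgb.
pose c : R := if dotv y (V i) <= 0 then 1 else -1.
exists (fun j => if j == i then c else sg j); split.
  by move=> j; case: (j == i) => //; rewrite /c; case: (_ <= 0); [left|right].
rewrite big_cons eqxx.
have -> : \sum_(j <- r) (if j == i then c else sg j) *: V j = y.
  rewrite /y big_seq_cond [in RHS]big_seq_cond; apply: eq_bigr => j /andP [jr _].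
  by case: eqP => // ji; move: ir; rewrite -ji jr.
rewrite addrC dotv_expand Vu -natr1.
have hc : c * dotv y (V i) <= 0.
  rewrite /c; case: ifP => h; first by rewrite mul1r.
  by rewrite mulN1r oppr_le0 ltW // ltNge h.
have c2 : c ^+ 2 = 1 by rewrite /c; case: ifP => _; rewrite ?sqrrN expr1n.
rewrite c2 mulr1; lra.
Qed.

Lemma greedy (R : realType) (d n : nat) (V : 'I_n -> 'rV[R]_d)
    (Vu : forall i, dotv (V i) (V i) = 1) (T : {set 'I_n}) :
  exists sg : 'I_n -> R, (forall i, sg i = 1 \/ sg i = -1) /\
    dotv (\sum_(i in T) sg i *: V i) (\sum_(i in T) sg i *: V i) <= #|T|%:R.
Proof.
have [sg [h1 h2]] := greedy_seq Vu (enum_uniq (mem T)).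
by exists sg; split => //; rewrite -!big_enum cardE.
Qed.

Lemma sum_ind (R : realType) (n : nat) (T : {set 'I_n}) :
  \sum_i ((i \in T)%:R : R) = #|T|%:R.
Proof.
rewrite -sumr_const [RHS]big_mkcond /=; apply: eq_bigr => i _.
by case: (i \in T).
Qed.

Lemma sepkey (R : realType) (N n d : nat) (A : 'M[bool]_(N, n))
    (U : 'I_N -> 'rV[R]_d) (V : 'I_n -> 'rV[R]_d) (m : R) (s : nat)
    (T T' : {set 'I_n}) (sg sg' : 'I_n -> R) :
  0 < m -> margin_embedding A m U V ->
  (forall i, sg i = 1 \/ sg i = -1) -> (forall i, sg' i = 1 \/ sg' i = -1) ->
  #|T| = s -> #|T'| = s -> (#|T :&: T'|%:R < s%:R / 2 :> R) ->
  shattered (row_family A) (T :|: T') ->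
  m * s%:R < nrm (\sum_(i in T) sg i *: V i - \sum_(i in T') sg' i *: V i).
Proof.
move=> m0 [Uu [Vu [Ap An]]] sgpm sgpm' cT cT' cI sh.
pose c i := (if i \in T then sg i else 0) - (if i \in T' then sg' i else 0).
have -> : \sum_(i in T) sg i *: V i - \sum_(i in T') sg' i *: V i = \sum_i c i *: V i.
  apply/rowP => k; rewrite !mxE !summxE (big_mkcond (mem T)) (big_mkcond (mem T')) /=.
  rewrite -sumrB; apply: eq_bigr => i _; rewrite /c.
  by case: (i \in T); case: (i \in T'); rewrite !mxE /=; ring.
set B := T :|: T'.
pose C := [set i in B | 0 < c i].
have CB : C \subset B by apply/fintype.subsetP => i; rewrite inE => /andP [].
have [S' S'F S'C] := sh C CB.
have [j _ S'j] := imsetP S'F.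
have cB : forall i, c i != 0 -> i \in B.
  move=> i; rewrite /c /B finset.in_setU; case: (i \in T); case: (i \in T') => //.
  by rewrite subrr eqxx.
have hA : forall i, m * `|c i| <= c i * dotv (U j) (V i).
  move=> i; have [cpos|cneg|c0] := ltgtP (c i) 0.
  - have iB := cB i (ltr0_neq0 cpos).
    have iC : i \notin C by rewrite inE iB /= ltNge ltW.
    have : i \notin S'.
      by apply: contra iC => iS; rewrite -S'C inE iS iB.
    rewrite S'j /row_supp inE => /An hd.
    rewrite ltr0_norm // mulrN -mulNr mulrC; apply: ler_wnM2l; [exact: ltW | lra].
  - have iB := cB i (lt0r_neq0 cneg).
    have iC : i \in C by rewrite inE iB /=.
    have : i \in S' by move: iC; rewrite -S'C inE => /andP [].
    rewrite S'j /row_supp inE => /Ap hd.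
    by rewrite gtr0_norm // mulrC; apply: ler_wpM2l => //; apply: ltW.
  - by rewrite c0 normr0 mulr0 mul0r.
pose b i : R := (i \in T)%:R + (i \in T')%:R - 2 * (i \in T :&: T')%:R.
have hb : forall i, b i <= `|c i|.
  move=> i; rewrite /b /c finset.in_setI ler_normr.
  case: (sgpm i) => ->; case: (sgpm' i) => ->;
    case: (i \in T); case: (i \in T'); rewrite /= ?mulr0 ?mulr1 ?subr0 ?sub0r ?addr0 ?add0r;
    apply/orP; (try by left; lra); (try by right; lra).
have sb : \sum_i b i = 2 * s%:R - 2 * #|T :&: T'|%:R.
  rewrite /b !sumrB big_split /= -mulr_sumr !sum_ind cT cT'; ring.
have h1 : m * (2 * s%:R - 2 * #|T :&: T'|%:R) <= dotv (U j) (\sum_i c i *: V i).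
  rewrite dotv_sum -sb mulr_sumr; apply: ler_sum => i _.
  apply: le_trans (hA i); apply: ler_wpM2l; [exact: ltW | exact: hb].
have h2 := dot_le_nrm (U j) (\sum_i c i *: V i).
have nU : nrm (U j) = 1 by rewrite /nrm (Uu j) sqrtr1.
rewrite nU mul1r in h2.
apply: (lt_le_trans _ (le_trans h1 h2)).
rewrite ltr_pM2l //; lra.
Qed.

Unset Implicit Arguments.
Set Strict Implicit.

Theorem theoremF1 (R : realType) (N n d k : nat) (A : 'M[bool]_(N, n))
    (U : 'I_N -> 'rV[R]_d) (V : 'I_n -> 'rV[R]_d) (m alpha : R) (s : nat)
    (F : {set {set 'I_n}}) :
  (forall j : 'I_N, #|row_supp A j| = k) ->
  0 < m ->
  margin_embedding A m U V ->
  0 < alpha -> alpha <= 1 / 2 ->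
  (s%:Z = Num.floor (alpha * k%:R))%R ->
  (1 <= s)%N ->
  (forall T, T \in F -> #|T| = s) ->
  (forall T T', T \in F -> T' \in F -> T != T' ->
     (#|T :&: T'|%:R < s%:R / 2 :> R) /\ shattered (row_family A) (T :|: T')) ->
  ln (#|F|%:R : R) / ln (1 + 2 / (m * Num.sqrt (s%:R))) <= d%:R.
Proof.
move=> _ m0 emb _ _ _ s1 Fs Fp.
have emb' := emb; move: emb' => [_ [Vu _]].
have [sgf Hsg] := choice (fun T => greedy Vu T).
pose xT (T : {set 'I_n}) := \sum_(i in T) sgf T i *: V i.
pose P := [seq xT T | T <- enum F].
have s0 : 0 < s%:R :> R by rewrite ltr0n.
have rho0 : 0 < Num.sqrt (s%:R : R) by rewrite sqrtr_gt0.
have delta0 : 0 < m * s%:R by apply: mulr_gt0.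
have Pb : forall p, p \in P -> nrm p <= Num.sqrt (s%:R).
  move=> p /mapP [T TF ->]; rewrite mem_enum in TF.
  have [_ h] := Hsg T; rewrite /nrm; apply: ler_wsqrtr.
  by rewrite -(Fs T TF); apply: h.
have Pp : pairwise (sep (m * s%:R)) P.
  rewrite pairwise_map.
  have := enum_uniq (mem F); rewrite uniq_pairwise.
  apply: (sub_in_pairwise (P := mem (enum F))); last by apply/allP.
  move=> T T' TF T'F /= TT'; rewrite mem_enum in TF; rewrite mem_enum in T'F.
  have [cI sh] := Fp T T' TF T'F TT'.
  have [pm1 _] := Hsg T; have [pm2 _] := Hsg T'.
  exact: (sepkey m0 emb pm1 pm2 (Fs T TF) (Fs T' T'F) cI sh).
have := packing rho0 delta0 Pb Pp.
rewrite size_map -cardE.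
set q := 1 + 2 / (m * Num.sqrt s%:R).
have -> : 1 + 2 * Num.sqrt s%:R / (m * s%:R) = q.
  rewrite /q; congr (1 + _).
  have ss : (s%:R : R) = Num.sqrt s%:R * Num.sqrt s%:R by rewrite -expr2 sqr_sqrtr // ltW.
  have gen : forall r : R, 0 < r -> 2 * r / (m * (r * r)) = 2 / (m * r).
    by move=> r r0; field; rewrite gt_eqF //= gt_eqF.
  by rewrite [in X in _ / (_ * X)]ss gen.
move=> hM.
have q1 : 1 < q by rewrite /q ltrDl; apply: divr_gt0 => //; apply: mulr_gt0.
have lq : 0 < ln q by apply: ln_gt0.
rewrite ler_pdivrMr //.
have [F0|Fpos] := eqVneq #|F| 0%N.
  by rewrite F0 ln0 // mulr_ge0 // ?ler0n // ltW.
have Mpos : 0 < (#|F|%:R : R) by rewrite ltr0n lt0n.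
apply: (le_trans (y := ln (q ^+ d))).
  rewrite ler_ln // posrE ?exprn_gt0 //; apply: (lt_trans ltr01 q1).
by rewrite lnXn ?mulr_natl //; apply: (lt_trans ltr01 q1).
Qed.
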